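(* Fix $k\in\mathbb{N}$ and let $\alpha=\alpha(n)\in(0,\infty)$. If $\alpha/\sqrt{n}\to\infty$ as $n\to\infty$, then $d_{TV}(M_{n,k}^{\alpha},M_{n,k}^{\infty})\to 0$ as $n\to\infty$.
   Context: A $k$-out map on $[n]$ is a map $M:[n]\to[n]^k$, viewed as a digraph on $[n]$ in which each vertex has $k$ out-arcs labeled $1,\dots,k$; $\mathcal{M}_{n,k}$ denotes the set of all such maps. The in-degree $d_j$ of vertex $j$ is the total number of coordinates, over all vertices $i$ and all $k$ labels, of $M(i)$ equal to $j$ (so $d_1+\dots+d_n=kn$). For $\alpha\in(0,\infty)$, the random $k$-out map $M_{n,k}^{\alpha}$ is generated by inserting $kn$ out-arcs, $k$ per vertex: every vertex starts with weight $\alpha$; at each step a vertex whose out-degree is below $k$ picks its next image $j$ with probability proportional to the current weight of $j$, and the weight of $j$ then increases by $1$. Its law is $P(M_{n,k}^{\alpha}=M)=\prod_{j=1}^n \alpha^{\overline{d_j}}/(\alpha n)^{\overline{kn}}$, where $(d_1,\dots,d_n)$ is the in-degree sequence of $M$ and $x^{\overline{y}}=x(x+1)\cdots(x+y-1)$. $M_{n,k}^{\infty}$ denotes the uniformly random element of $\mathcal{M}_{n,k}$ (probability $n^{-kn}$ each). $d_{TV}(M_{n,k}^{\alpha},M_{n,k}^{\infty})=\sup_{\mathcal{A}\subseteq\mathcal{M}_{n,k}}|P(M_{n,k}^{\alpha}\in\mathcal{A})-P(M_{n,k}^{\infty}\in\mathcal{A})|=\frac12\sum_{M\in\mathcal{M}_{n,k}}|P(M_{n,k}^{\alpha}=M)-P(M_{n,k}^{\infty}=M)|$.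 *)

(* Defs.v *)
From HB Require Import structures.
From mathcomp Require Import all_boot all_order all_algebra.
From mathcomp Require Import all_classical all_reals all_analysis.
Set Implicit Arguments. Unset Strict Implicit. Unset Printing Implicit Defensive.
Import Order.TTheory GRing.Theory Num.Theory.
Local Open Scope ring_scope.

Definition kout_map (n k : nat) := {ffun 'I_n -> k.-tuple 'I_n}.

Definition indeg (n k : nat) (M : kout_map n k) (j : 'I_n) : nat :=
  #|[set p : 'I_n * 'I_k | tnth (M p.1) p.2 == j]|.

Definition rising {R : pzRingType} (x : R) (y : nat) : R :=
  \prod_(i < y) (x + i%:R).

Definition prob_alpha {R : realType} (n k : nat) (alpha : R) (M : kout_map n k) : R :=
  (\prod_(j < n) rising alpha (indeg M j)) / rising (alpha * n%:R) (k * n).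

Definition prob_unif {R : realType} (n k : nat) (M : kout_map n k) : R :=
  (n%:R ^+ (k * n))^-1.

Definition dTV {R : realType} (n k : nat) (alpha : R) : R :=
  2^-1 * \sum_(M : kout_map n k) `|prob_alpha alpha M - @prob_unif R n k M|.

(* Main.v *)
Require Import Defs.
From HB Require Import structures.
From mathcomp Require Import all_boot all_order all_algebra.
From mathcomp Require Import all_classical all_reals all_analysis.
From mathcomp Require Import ring lra zify.
Import Order.TTheory GRing.Theory Num.Theory numFieldNormedType.Exports.
Local Open Scope classical_set_scope.
Local Open Scope ring_scope.

Lemma key_ineq (R : realType) (p q Y e : R) : 0 < q -> 0 <= p -> 0 < e ->
  q * expR (- Y) <= p ->
  `|p - q| <= e * (p + q) + (p - q + q * Y) / (2 * e).
Proof.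
move=> q0 p0 e0 hp.
set a := Num.sqrt p; set b := Num.sqrt q.
have a0 : 0 <= a by exact: sqrtr_ge0.
have b0 : 0 <= b by exact: sqrtr_ge0.
have ha : a ^+ 2 = p by rewrite sqr_sqrtr.
have hb : b ^+ 2 = q by rewrite sqr_sqrtr // ltW.
set c := expR (- (Y / 2)).
have hc : c ^+ 2 = expR (- Y).
  by rewrite expr2 -expRD; congr expR; field.
have c1 : 1 - Y / 2 <= c by rewrite /c; have := expR_ge1Dx (- (Y/2)); lra.
have c0 : 0 <= c by exact: expR_ge0.
have hab : q * c <= a * b.
  have : (q * c) ^+ 2 <= (a * b) ^+ 2.
    rewrite !exprMn ha hb hc expr2 -mulrA [p * q]mulrC ler_pM2l //.
  have : 0 <= q * c by apply: mulr_ge0 => //; exact: ltW.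
  have : 0 <= a * b by exact: mulr_ge0.
  move=> h1 h2 h3; by rewrite -(@ler_pXn2r _ 2) ?nnegrE.
have hpq : p - q = (a - b) * (a + b) by rewrite -ha -hb; ring.
rewrite hpq normrM (ger0_norm (addr_ge0 a0 b0)).
set d := `|a - b|.
have hd : d ^+ 2 = (a - b) ^+ 2 by rewrite /d real_normK // num_real.
have d0 : 0 <= d by exact: normr_ge0.
have key : 2 * e * (d * (a + b)) <= 2 * e * (e * (p + q)) + (p - q + q * Y).
  have h1 : 0 <= (e * (a + b) - d) ^+ 2 by exact: sqr_ge0.
  nra.
rewrite -hpq.
have e2 : 2 * e != 0 by rewrite mulf_neq0 // ?lt0r_neq0 //; lra.
have E : e * (p + q) + (p - q + q * Y) / (2 * e) =
   (2 * e)^-1 * (2 * e * (e * (p + q)) + (p - q + q * Y)).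
  field; by rewrite lt0r_neq0.
rewrite E -[d * (a + b)](mulKf e2) ler_pM2l ?invr_gt0 //; lra.
Qed.

Lemma risingS (R : pzRingType) (a : R) d : rising a d.+1 = rising a d * (a + d%:R).
Proof. by rewrite /rising big_ord_recr. Qed.

Definition W {R : realType} {n : nat} (a : R) (s : seq 'I_n) : R :=
  \prod_(j < n) rising a (count_mem j s).

Lemma W_cons (R : realType) n (a : R) (v : 'I_n) s :
  W a (v :: s) = W a s * (a + (count_mem v s)%:R).
Proof.
rewrite /W (bigD1 v) //= [in RHS](bigD1 v) //= eqxx add1n risingS.
rewrite -!mulrA; congr (_ * _); rewrite mulrC; congr (_ * _).
by apply: eq_bigr => j /negbTE; rewrite eq_sym => ->.
Qed.

Lemma sum_count n (s : seq 'I_n) : (\sum_(j < n) count_mem j s)%N = size s.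
Proof.
elim: s => [|x s IH] /=; first by rewrite big1.
rewrite big_split /= IH.
have -> : (\sum_(j < n) (x == j))%N = 1%N.
  rewrite (bigD1 x) //= eqxx big1 // => j.
  by rewrite eq_sym => /negbTE ->.
by [].
Qed.

Lemma sum_tupleS (T : Type) (idx : T) (op : Monoid.com_law idx) n m
  (F : m.+1.-tuple 'I_n -> T) :
  \big[op/idx]_(t : m.+1.-tuple 'I_n) F t =
  \big[op/idx]_(v : 'I_n) \big[op/idx]_(t : m.-tuple 'I_n) F [tuple of v :: t].
Proof.
rewrite pair_big /=.
rewrite (reindex (fun p : 'I_n * m.-tuple 'I_n => [tuple of p.1 :: p.2])) //=.
exists (fun t => (thead t, [tuple of behead t])) => [[v t]|t] _ /=.
  by congr pair; apply: val_inj.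
by rewrite [RHS]tuple_eta.
Qed.

Fixpoint A1 {n} (s : seq 'I_n) : nat :=
  if s is v :: s' then (A1 s' + count_mem v s')%N else 0%N.
Fixpoint A2 {n} (s : seq 'I_n) : nat :=
  if s is v :: s' then (A2 s' + (count_mem v s') ^ 2)%N else 0%N.
Definition D2 {n} (s : seq 'I_n) : nat := (\sum_(j < n) (count_mem j s) ^ 2)%N.
Definition Tm (m : nat) : nat := (\sum_(i < m) i)%N.

Lemma D2_cons n (v : 'I_n) s : D2 (v :: s) = (D2 s + 2 * count_mem v s + 1)%N.
Proof.
rewrite /D2 (bigD1 v) //= [in RHS](bigD1 v) //= eqxx.
rewrite (eq_bigr (fun j => count_mem j s ^ 2)%N); last first.
  by move=> j /negbTE; rewrite eq_sym => ->.
set X := (\sum_(i < n | i != v) count_mem i s ^ 2)%N; rewrite /= add1n; lia.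
Qed.

Lemma sum_tuple_const n m (c : nat) :
  (\sum_(t : m.-tuple 'I_n) c)%N = (c * n ^ m)%N.
Proof. by rewrite sum_nat_const card_tuple card_ord mulnC. Qed.

Lemma sum_tuple0 (T : Type) (idx : T) (op : Monoid.com_law idx) n
  (F : 0.-tuple 'I_n -> T) :
  \big[op/idx]_(t : 0.-tuple 'I_n) F t = F [tuple].
Proof.
rewrite (big_pred1 [tuple]) // => t /=.
by apply/esym/eqP; apply: tuple0.
Qed.

Lemma sumA1 n m : (n * \sum_(t : m.-tuple 'I_n) A1 t = n ^ m * Tm m)%N.
Proof.
elim: m => [|m IH]; first by rewrite sum_tuple0 /Tm big_ord0 /= !muln0.
rewrite sum_tupleS exchange_big /=.
rewrite (eq_bigr (fun t : m.-tuple 'I_n => n * A1 t + m)%N); last first.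
  move=> t _; rewrite big_split /= sum_nat_const card_ord sum_count size_tuple.
  by [].
rewrite big_split /= -big_distrr /= sum_tuple_const.
rewrite mulnDr IH /Tm big_ord_recr /= expnS -/(Tm m).
set T := Tm m; nia.
Qed.

Lemma sumD2 n m : (n * \sum_(t : m.-tuple 'I_n) D2 t <= n ^ m * (n * m + m ^ 2))%N.
Proof.
elim: m => [|m IH]; first by rewrite sum_tuple0 /D2 big1 ?muln0.
rewrite sum_tupleS exchange_big /=.
rewrite (eq_bigr (fun t : m.-tuple 'I_n => n * D2 t + (2 * m + n))%N); last first.
  move=> t _; rewrite (eq_bigr (fun v => D2 t + 2 * count_mem v t + 1)%N); last first.
    by move=> v _; rewrite D2_cons.
  rewrite big_split big_split /= -big_distrr /= !sum_nat_const card_ord sum_count size_tuple.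
  lia.
rewrite big_split /= -big_distrr /= sum_tuple_const expnS.
have := leq_mul (leqnn n) IH.
set S := (\sum_(_ : m.-tuple _) _)%N; set P := (n ^ m)%N; nia.
Qed.

Lemma sumA2 n m : (n ^ 2 * \sum_(t : m.-tuple 'I_n) A2 t <= n ^ m * (n * m ^ 2 + m ^ 3))%N.
Proof.
elim: m => [|m IH]; first by rewrite sum_tuple0 /= !muln0.
rewrite sum_tupleS exchange_big /=.
rewrite (eq_bigr (fun t : m.-tuple 'I_n => n * A2 t + D2 t)%N); last first.
  move=> t _; rewrite big_split /= sum_nat_const card_ord.
  by rewrite /D2 mulnC.
rewrite big_split /= -big_distrr /= mulnDr mulnA [(_ * n)%N]mulnC -mulnA.
have := leq_mul (leqnn n) IH.
have := leq_mul (leqnn n) (sumD2 n m).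
set S1 := (\sum_(_ : m.-tuple _) A2 _)%N; set S2 := (\sum_(_ : m.-tuple _) D2 _)%N; set P := (n ^ m)%N.
rewrite expnS !expnS ?expn1 ?expn0 ?muln1; nia.
Qed.

Lemma sumW (R : realType) n m (a : R) :
  \sum_(t : m.-tuple 'I_n) W a t = rising (a * n%:R) m.
Proof.
elim: m => [|m IH].
  by rewrite sum_tuple0 /W /rising big_ord0; apply: big1 => j _; rewrite big_ord0.
rewrite sum_tupleS exchange_big /=.
rewrite (eq_bigr (fun t : m.-tuple 'I_n => W a t * (a * n%:R + m%:R))); last first.
  move=> t _; rewrite (eq_bigr (fun v => W a t * (a + (count_mem v t)%:R))); last first.
    by move=> v _; rewrite W_cons.
  rewrite -mulr_sumr big_split /= sumr_const card_ord -natr_sum sum_count size_tuple.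
  by rewrite mulr_natr mulrC.
by rewrite -mulr_suml IH risingS.
Qed.

Lemma expR_le1D (R : realType) (x : R) : 0 <= x -> expR (x - x ^+ 2) <= 1 + x.
Proof.
move=> x0.
have h1 : x - x ^+ 2 <= x / (1 + x).
  rewrite ler_pdivlMr; last by lra.
  have : 0 <= x ^+ 3 by exact: exprn_ge0.
  rewrite !exprS expr0 !mulr1 => h.
  have -> : (x - x * x) * (1 + x) = x - x * (x * x) by ring.
  lra.
rewrite -ler_expR in h1; apply: (le_trans h1).
have h2 := expR_ge1Dx (- (x / (1 + x))).
have E : 1 + - (x / (1 + x)) = (1 + x)^-1.
  by field; rewrite lt0r_neq0 //; lra.
rewrite E expRN in h2.
move: h2; rewrite lef_pV2 ?posrE ?expR_gt0 //; lra.
Qed.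

Lemma W_low (R : realType) n (a : R) (s : seq 'I_n) : 0 < a ->
  a ^+ size s * expR ((A1 s)%:R / a - (A2 s)%:R / a ^+ 2) <= W a s.
Proof.
move=> a0; elim: s => [|v s IH].
  rewrite /= expr0 mul1r !mul0r subrr expR0 (_ : W a [::] = 1) //; apply: big1 => j _; by rewrite /rising big_ord0.
rewrite W_cons /= !natrD natrX.
set c := (count_mem v s)%:R : R.
have c0 : 0 <= c by exact: ler0n.
have hc : a * expR (c / a - c ^+ 2 / a ^+ 2) <= a + c.
  have := @expR_le1D _ _ (divr_ge0 c0 (ltW a0)).
  rewrite expr_div_n => h.
  have E : a + c = a * (1 + c / a) by field; rewrite lt0r_neq0.
  by rewrite E ler_pM2l.
have E : (A1 s)%:R / a + c / a - ((A2 s)%:R + c ^+ 2) / a ^+ 2 =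
   ((A1 s)%:R / a - (A2 s)%:R / a ^+ 2) + (c / a - c ^+ 2 / a ^+ 2).
  by rewrite !mulrDl; ring.
rewrite mulrDl E expRD exprS.
have -> : a * a ^+ size s * (expR ((A1 s)%:R / a - (A2 s)%:R / a ^+ 2) *
    expR (c / a - c ^+ 2 / a ^+ 2)) =
  (a ^+ size s * expR ((A1 s)%:R / a - (A2 s)%:R / a ^+ 2)) *
  (a * expR (c / a - c ^+ 2 / a ^+ 2)) by ring.
apply: ler_pM => //.
  by apply: mulr_ge0; [apply: exprn_ge0; exact: ltW| exact: expR_ge0].
by apply: mulr_ge0; [exact: ltW| exact: expR_ge0].
Qed.

Lemma rising_ge0 (R : realType) (b : R) m : 0 <= b -> 0 <= rising b m.
Proof.
move=> b0; apply: prodr_ge0 => i _; apply: addr_ge0 => //; exact: ler0n.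
Qed.

Lemma R_up (R : realType) (b : R) m : 0 < b ->
  rising b m <= b ^+ m * expR ((Tm m)%:R / b).
Proof.
move=> b0; elim: m => [|m IH].
  by rewrite /rising /Tm !big_ord0 mul0r expR0 expr0 mulr1.
rewrite risingS /Tm big_ord_recr /= -/(Tm m) natrD mulrDl expRD exprS.
have hm : b + m%:R <= b * expR (m%:R / b).
  have := expR_ge1Dx (m%:R / b).
  have E : b + m%:R = b * (1 + m%:R / b) by field; rewrite lt0r_neq0.
  by rewrite E ler_pM2l.
have -> : b * b ^+ m * (expR ((Tm m)%:R / b) * expR (m%:R / b)) =
  (b ^+ m * expR ((Tm m)%:R / b)) * (b * expR (m%:R / b)) by ring.
apply: ler_pM => //.
  by apply: rising_ge0; exact: ltW.
by apply: addr_ge0; [exact: ltW| exact: ler0n].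
Qed.

Lemma tv_tuple (R : realType) n m (a e : R) : (0 < n)%N -> 0 < a -> 0 < e ->
  \sum_(t : m.-tuple 'I_n) `|W a t / rising (a * n%:R) m - (n%:R ^+ m)^-1| <=
  2 * e + ((n * m ^ 2 + m ^ 3)%:R / (n%:R ^+ 2 * a ^+ 2)) / (2 * e).
Proof.
move=> n0 a0 e0.
set N : R := n%:R.
have N0 : 0 < N by rewrite ltr0n.
set b := a * N.
have b0 : 0 < b by exact: mulr_gt0.
set Rr := rising b m.
have Rr0 : 0 < Rr.
  by apply: prodr_gt0 => i _; have := ler0n R i; lra.
set P := N ^+ m.
have P0 : 0 < P by exact: exprn_gt0.
set q := P^-1.
have q0 : 0 < q by rewrite invr_gt0.
pose Y (t : m.-tuple 'I_n) : R :=
  (Tm m)%:R / b - (A1 t)%:R / a + (A2 t)%:R / a ^+ 2.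
have hpt : forall t : m.-tuple 'I_n, q * expR (- Y t) <= W a t / Rr.
  move=> t.
  have h1 := @W_low R n a (tval t) a0; rewrite size_tuple in h1.
  have h2 := @R_up R b m b0.
  set E1 := expR _ in h1; set E2 := expR _ in h2.
  have E10 : 0 < E1 by exact: expR_gt0.
  have E20 : 0 < E2 by exact: expR_gt0.
  have am0 : 0 < a ^+ m by exact: exprn_gt0.
  have bm0 : 0 < b ^+ m by exact: exprn_gt0.
  have h3 : (b ^+ m * E2)^-1 <= Rr^-1.
    by rewrite lef_pV2 ?posrE // mulr_gt0.
  have h4 : a ^+ m * E1 * (b ^+ m * E2)^-1 <= W a t * Rr^-1.
    apply: ler_pM => //.
      by apply: mulr_ge0; exact: ltW.
    by rewrite invr_ge0; apply: mulr_ge0; exact: ltW.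
  apply: (le_trans _ h4); rewrite le_eqVlt; apply/orP; left; apply/eqP.
  have -> : - Y t = ((A1 t)%:R / a - (A2 t)%:R / a ^+ 2) - (Tm m)%:R / b.
    by rewrite /Y; ring.
  rewrite expRB -/E1 -/E2 /q /P /b exprMn.
  field; by rewrite (lt0r_neq0 E20) (lt0r_neq0 am0) lt0r_neq0 // exprn_gt0.
have W0 : forall t : m.-tuple 'I_n, 0 <= W a t / Rr.
  move=> t; apply: divr_ge0; last exact: ltW.
  by apply: prodr_ge0 => j _; apply: rising_ge0; exact: ltW.
apply: (le_trans (ler_sum _ (fun t _ => @key_ineq R _ _ _ _ q0 (W0 t) e0 (hpt t)))).
have Sp : \sum_(t : m.-tuple 'I_n) W a t / Rr = 1.
  by rewrite -mulr_suml sumW -/N -/b -/Rr divff // lt0r_neq0.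
have Sq : \sum_(t : m.-tuple 'I_n) q = 1.
  by rewrite sumr_const card_tuple card_ord -mulr_natr natrX -/N -/P mulVf // lt0r_neq0.
set SA1 : R := (\sum_(t : m.-tuple 'I_n) A1 t)%:R.
set SA2 : R := (\sum_(t : m.-tuple 'I_n) A2 t)%:R.
have hA1 : N * SA1 = P * (Tm m)%:R.
  by have := congr1 (fun x : nat => x%:R : R) (sumA1 n m); rewrite !natrM natrX.
have hA2 : N ^+ 2 * SA2 <= P * (n * m ^ 2 + m ^ 3)%:R.
  by have := sumA2 n m; rewrite -(ler_nat R) !natrM !natrX.
have SY : \sum_t Y t = (Tm m)%:R / b * P - SA1 / a + SA2 / a ^+ 2.
  rewrite /Y big_split sumrB /= sumr_const card_tuple card_ord -[(_ *+ (n ^ m)%N)]mulr_natr natrX.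
  by rewrite -!mulr_suml -!natr_sum.
have hq : q * \sum_t Y t = (N ^+ 2 * SA2) / (P * (N ^+ 2 * a ^+ 2)).
  rewrite SY /q /b.
  have -> : SA1 = P * (Tm m)%:R / N by rewrite -hA1; field; rewrite lt0r_neq0.
  field; by rewrite !lt0r_neq0 // exprn_gt0.
rewrite big_split /= -mulr_sumr -mulr_suml !big_split /= sumrN -mulr_sumr Sp Sq hq.
have h5 : N ^+ 2 * SA2 / (P * (N ^+ 2 * a ^+ 2)) <=
    (n * m ^ 2 + m ^ 3)%:R / (N ^+ 2 * a ^+ 2).
  have D0 : 0 < N ^+ 2 * a ^+ 2 by rewrite mulr_gt0 // exprn_gt0.
  rewrite invfM mulrA ler_pM2r ?invr_gt0 //.
  by rewrite ler_pdivrMr // [X in _ <= X]mulrC.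
have e2 : 0 < (2 * e)^-1 by rewrite invr_gt0; lra.
have := ler_pM2r e2; move=> h7.
have h8 : N ^+ 2 * SA2 / (P * (N ^+ 2 * a ^+ 2)) / (2 * e) <=
    (n * m ^ 2 + m ^ 3)%:R / (N ^+ 2 * a ^+ 2) / (2 * e) by rewrite h7.
rewrite subrr add0r; lra.
Qed.

Lemma map_const (T : Type) (k : nat) (s : seq T) :
  [seq k | _ <- s] = nseq (size s) k.
Proof. by elim: s => //= x s ->. Qed.

Definition flatM {n k : nat} (M : kout_map n k) : seq 'I_n :=
  flatten [seq tval (M i) | i <- enum 'I_n].

Lemma count_flatM n k (M : kout_map n k) (j : 'I_n) :
  count_mem j (flatM M) = (\sum_(i < n) count_mem j (M i))%N.
Proof.
rewrite /flatM count_flatten -map_comp sumnE big_map.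
by rewrite big_enum.
Qed.

Lemma indeg_flat n k (M : kout_map n k) (j : 'I_n) :
  indeg M j = count_mem j (flatM M).
Proof.
rewrite count_flatM /indeg -sum1dep_card.
rewrite -(pair_big_dep xpredT (fun i l => tnth (M i) l == j) (fun _ _ => 1%N)) /=.
apply: eq_bigr => i _.
by rewrite -sum1_count big_tuple.
Qed.

Lemma size_flatM n k (M : kout_map n k) : size (flatM M) == (k * n)%N.
Proof.
rewrite /flatM size_flatten /shape -map_comp.
rewrite (eq_map (_ : size \o (fun i => tval (M i)) =1 fun=> k)); last first.
  by move=> i /=; rewrite size_tuple.
by rewrite map_const sumn_nseq size_enum_ord.
Qed.

Definition tflat {n k : nat} (M : kout_map n k) : (k * n).-tuple 'I_n :=
  Tuple (size_flatM n k M).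

Lemma tflat_inj n k : injective (@tflat n k).
Proof.
move=> M1 M2 /(congr1 val) /= h.
have h2 := congr1 (reshape (nseq n k)) h.
have sh : forall M : kout_map n k, shape [seq tval (M i) | i <- enum 'I_n] = nseq n k.
  move=> M; rewrite /shape -map_comp.
  rewrite (eq_map (_ : size \o (fun i => tval (M i)) =1 fun=> k)); last first.
    by move=> i /=; rewrite size_tuple.
  by rewrite map_const size_enum_ord.
rewrite /flatM -{1}(sh M1) -(sh M2) !flattenK in h2.
apply/ffunP => i; apply: val_inj.
have : i \in enum 'I_n by rewrite mem_enum.
by move/(eq_in_map _ _ _).2: h2; apply.
Qed.

Lemma tflat_bij n k : bijective (@tflat n k).
Proof.
apply: inj_card_bij; first exact: tflat_inj.
by rewrite card_tuple card_ffun !card_ord card_tuple card_ord -expnM mulnC.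
Qed.

Lemma dTV_tuple (R : realType) n k (a : R) :
  dTV n k a = 2^-1 * \sum_(t : (k * n).-tuple 'I_n)
     `|W a t / rising (a * n%:R) (k * n) - (n%:R ^+ (k * n))^-1|.
Proof.
rewrite /dTV; congr (_ * _).
rewrite (reindex (@tflat n k)) /=; last exact: onW_bij (tflat_bij n k).
apply: eq_bigr => M _.
rewrite /prob_alpha /prob_unif /W /=.
congr (`| _ / _ - _ |); apply: eq_bigr => j _.
by rewrite indeg_flat.
Qed.

Lemma dTV_bound (R : realType) n k (a e : R) : (0 < n)%N -> 0 < a -> 0 < e ->
  dTV n k a <= e + ((k ^ 2 + k ^ 3)%:R * (n%:R / a ^+ 2)) / (4 * e).
Proof.
move=> n0 a0 e0.
rewrite dTV_tuple.
have := @tv_tuple R n (k * n)%N a e n0 a0 e0.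
have N0 : 0 < (n%:R : R) by rewrite ltr0n.
have -> : (n * (k * n) ^ 2 + (k * n) ^ 3)%:R / ((n%:R : R) ^+ 2 * a ^+ 2) =
   (k ^ 2 + k ^ 3)%:R * (n%:R / a ^+ 2).
  rewrite !natrD natrM natrX natrX natrX natrX !natrM; field.
  by rewrite !lt0r_neq0.
move=> h.
have h2 : 0 <= 2^-1 :> R by rewrite invr_ge0 ler0n.
have := ler_wpM2l h2 h.
set X := (k ^ 2 + k ^ 3)%:R * _.
have -> : 2^-1 * (2 * e + X / (2 * e)) = e + X / (4 * e).
  by field; rewrite lt0r_neq0.
by [].
Qed.

Theorem theorem1 (R : realType) (k : nat) (alpha : nat -> R)
  (alpha_pos : forall n, 0 < alpha n)
  (halpha : (fun n : nat => alpha n / Num.sqrt (n%:R)) @ \oo --> +oo) :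
  (fun n : nat => dTV n k (alpha n)) @ \oo --> 0.
Proof.
apply/cvgrPdist_le => eps eps0.
set e := eps / 2.
have e0 : 0 < e by rewrite /e; lra.
set C : R := (k ^ 2 + k ^ 3)%:R.
have C0 : 0 <= C by exact: ler0n.
set M := 1 + C / (4 * e ^+ 2).
have hM := cvgry_ge halpha M.
near=> n.
have n0 : (0 < n)%N by near: n; exact: nbhs_infty_ge.
have hn : M <= alpha n / Num.sqrt n%:R by near: n; exact: hM.
have dge0 : 0 <= dTV n k (alpha n).
  rewrite /dTV; apply: mulr_ge0; first by rewrite invr_ge0 ler0n.
  by apply: sumr_ge0 => M' _; exact: normr_ge0.
rewrite sub0r normrN ger0_norm //.
apply: (le_trans (@dTV_bound R n k (alpha n) e n0 (alpha_pos n) e0)).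
rewrite -/C.
set s := Num.sqrt n%:R in hn *.
set an := alpha n in hn *.
have a0 : 0 < an := alpha_pos n.
have s0 : 0 < s by rewrite sqrtr_gt0 ltr0n.
have hs : s ^+ 2 = n%:R by rewrite sqr_sqrtr // ler0n.
have M1 : 1 <= M.
  have : 0 <= C / (4 * e ^+ 2) by apply: divr_ge0 => //; rewrite mulr_ge0 // exprn_ge0 // ltW.
  rewrite /M; lra.
have hMa : M * s <= an by rewrite -ler_pdivlMr.
have h2 : M ^+ 2 * n%:R <= an ^+ 2.
  rewrite -hs -exprMn; rewrite ler_pXn2r ?nnegrE //. all: try exact: hMa. all: try lra.
  apply: mulr_ge0; lra.
have hCM : C <= 4 * e ^+ 2 * M.
  have e2 : 0 < 4 * e ^+ 2 by rewrite mulr_gt0 // exprn_gt0.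
  rewrite /M mulrDr mulr1 [_ * (C / _)]mulrC divfK; first lra.
  by rewrite lt0r_neq0.
have nge0 : 0 <= (n%:R : R) by exact: ler0n.
have hMM : M * n%:R <= M ^+ 2 * n%:R by rewrite expr2 ler_wpM2r // ler_peMl //; lra.
have e2 : 0 <= 4 * e ^+ 2 by rewrite mulr_ge0 // exprn_ge0 // ltW.
have hCn : C * n%:R <= 4 * e ^+ 2 * an ^+ 2.
  apply: (le_trans (ler_wpM2r nge0 hCM)).
  have -> : 4 * e ^+ 2 * M * n%:R = 4 * e ^+ 2 * (M * n%:R) by ring.
  apply: ler_wpM2l; first exact: e2. lra.
have E : C * (n%:R / an ^+ 2) / (4 * e) = (C * n%:R) / (4 * e * an ^+ 2).
  by field; rewrite !lt0r_neq0.
have hX : (C * n%:R) / (4 * e * an ^+ 2) <= e.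
  rewrite ler_pdivrMr; last by rewrite mulr_gt0 ?exprn_gt0 //; lra.
  have -> : e * (4 * e * an ^+ 2) = 4 * e ^+ 2 * an ^+ 2 by ring.
  exact: hCn.
rewrite E; rewrite /e; rewrite /e in hX; lra.
Unshelve. all: end_near.
Qed.
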